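(* Let $d=d(n)$ satisfy $12 \le d \le e^{\sqrt[3]{\log n}}$ and let $m = \frac{\log n \,\log\log\log n}{\log d\, \log\log n}$. If $p=p(n) \ge (8d+12)\frac{\log n}{n}$, then for all sufficiently large $n$, the probability that $G(n,p)$ contains a vertex set $S$ with $2 \le |S| \le \frac{n}{dm}$ and $|N(S)| < d|S|$ is at most $e^{-\frac32 pn}$.
   Context: $G(n,p)$ is the Erdős–Rényi random graph on a vertex set $V$ of size $n$ in which each pair of vertices is an edge independently with probability $p$; $\log$ is the natural logarithm. For $S\subseteq V$, the external neighbourhood $N(S)$ is the set of vertices $v \in V\setminus S$ adjacent to some vertex of $S$. *)

(* Defs.v *)
From HB Require Import structures.
From mathcomp Require Import all_boot all_order all_algebra.
From mathcomp Require Import all_classical all_reals all_analysis.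
Set Implicit Arguments. Unset Strict Implicit. Unset Printing Implicit Defensive.
Import Order.TTheory GRing.Theory Num.Theory.
Local Open Scope ring_scope.

(* A simple graph on vertex set 'I_n is a set of 2-element subsets (its edges). *)
Definition pairs (n : nat) : {set {set 'I_n}} := [set A : {set 'I_n} | #|A| == 2%N].

Definition nbhd (n : nat) (G : {set {set 'I_n}}) (S : {set 'I_n}) : {set 'I_n} :=
  [set v | (v \notin S) && [exists u in S, [set u; v] \in G]].

(* Probability that G(n,p) satisfies the event E: each of the C(n,2) possible
   edges present independently with probability p. *)
Definition gnp_prob (R : realType) (n : nat) (p : R)
    (E : pred {set {set 'I_n}}) : R :=
  \sum_(G in powerset (pairs n) | E G)
     p ^+ #|G| * (1 - p) ^+ (#|pairs n| - #|G|).

Definition m_param (R : realType) (n : nat) (d : R) : R :=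
  ln (n%:R : R) * ln (ln (ln (n%:R : R))) / (ln d * ln (ln (n%:R : R))).

Definition bad_event (R : realType) (n : nat) (d m : R) : pred {set {set 'I_n}} :=
  fun G => [exists S : {set 'I_n},
    [&& (2 <= #|S|)%N, (#|S|%:R <= (n%:R : R) / (d * m))
      & (#|nbhd G S|%:R < d * #|S|%:R)]].

Arguments gnp_prob [R] n p E.
Arguments bad_event [R] n d m.

(* Main.v *)
Require Import Defs.
From HB Require Import structures.
From mathcomp Require Import all_boot all_order all_algebra.
From mathcomp Require Import all_classical all_reals all_analysis.
From mathcomp Require Import ring lra zify.
Import Order.TTheory GRing.Theory Num.Theory.
Local Open Scope ring_scope.

Lemma prod_split (R : comNzRingType) (I : finType) (J : {set I}) (a b : I -> R) :
  \prod_i (if i \in J then a i else b i) = \prod_(i in J) a i * \prod_(i in ~: J) b i.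
Proof.
rewrite (bigID (mem J)) /=; congr (_ * _).
  by apply: eq_bigr => i ->.
apply: eq_big => [i|i /negbTE ->] //; by rewrite inE.
Qed.

Lemma sum_sub (R : comNzRingType) (I : finType) (P F : {set I}) (x y : R) :
  F \subset P ->
  \sum_(J in powerset P | J :&: F == finset.set0) x ^+ #|J| * y ^+ (#|P| - #|J|)
   = (x + y) ^+ #|P :\: F| * y ^+ #|F|.
Proof.
move=> sFP.
pose a i := if i \in P :\: F then x else 0.
pose b i := if i \in P then y else 1.
have H1 : \prod_i (a i + b i) = (x + y) ^+ #|P :\: F| * y ^+ #|F|.
  rewrite (bigID (mem P)) /= [X in _ * X]big1 ?mulr1; last first.
    by move=> i /negbTE Hi; rewrite /a /b !inE Hi andbF add0r.
  rewrite (bigID (mem F)) /= mulrC.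
  rewrite (eq_bigr (fun _ => x + y)); last first.
    by move=> i /andP[HP /negbTE HF]; rewrite /a /b !inE HP HF.
  rewrite [X in _ * X](eq_bigr (fun _ => y)); last first.
    by move=> i /andP[HP HF]; rewrite /a /b !inE HP HF add0r.
  rewrite !prodr_const; congr (_ ^+ _ * _ ^+ _); apply: eq_card => i; rewrite unfold_in /= ?inE.
    by rewrite andbC.
  by case: (boolP (i \in F)) => iF; rewrite ?(fintype.subsetP sFP _ iF) ?andbF.
rewrite -H1 bigA_distr big_mkcond /=.
apply: eq_bigr => J _.
rewrite prod_split powersetE.
case: ifP => [/andP[sJP /eqP JF0] | HJ].
  rewrite (eq_bigr (fun _ => x)); last first.
    move=> i iJ; rewrite /a !inE (fintype.subsetP sJP _ iJ) andbT.
    have : i \notin F.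
      apply/negP => iF; have : i \in J :&: F by rewrite inE iJ iF.
      by rewrite JF0 inE.
    by move=> ->.
  rewrite prodr_const; congr (_ * _).
  rewrite (bigID (mem P)) /= [X in _ * X]big1 ?mulr1; last first.
    by move=> i /andP[_ /negbTE Hi]; rewrite /b Hi.
  rewrite (eq_bigr (fun _ => y)); last by move=> i /andP[_ Hi]; rewrite /b Hi.
  rewrite prodr_const; congr (_ ^+ _).
  have -> : (#|P| - #|J| = #|P :\: J|)%N by rewrite cardsD (finset.setIidPr sJP).
  by apply: eq_card => i; rewrite inE [in RHS]unfold_in /= inE andbC.

have [k kJ Hk] : exists2 i, i \in J & i \notin P :\: F.
  apply/exists_inP; apply: contraFT HJ; rewrite negb_exists_in => /forall_inP H.
  apply/andP; split.
    by apply/fintype.subsetP => i iJ; move: (H i iJ); rewrite !inE negbK => /andP[].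
  apply/eqP/setP => i; rewrite !inE; apply/negP => /andP[iJ iF]. by move: (H i iJ); rewrite !inE negbK iF.
rewrite (bigD1 k) //= /a (negbTE Hk) mul0r.
by rewrite mul0r.
Qed.

Definition FS (n : nat) (S U : {set 'I_n}) : {set {set 'I_n}} :=
  [set [set u; w] | u in S, w in ~: (S :|: U)].

Arguments FS {n}.

Lemma FS_sub n (S U : {set 'I_n}) : FS S U \subset pairs n.
Proof.
apply/fintype.subsetP => A /imset2P[u w uS]; rewrite !inE negb_or => /andP[wS _] ->.
rewrite cards2; case: (u =P w) => [uw|//]; by move: wS; rewrite -uw uS.
Qed.

Lemma card_FS n (S U : {set 'I_n}) : #|FS S U| = (#|S| * #|~: (S :|: U)|)%N.
Proof.
rewrite /FS curry_imset2X card_in_imset ?cardsX //.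
move=> [u w] [u' w']; rewrite !inE /= !negb_or => /andP[uS /andP[wS _]] /andP[uS' /andP[wS' _]] E.
have : u \in [set u'; w'] by rewrite -E !inE eqxx.
rewrite !inE => /orP[/eqP eu|/eqP eu]; last by rewrite -eu uS in wS'.
have : w \in [set u'; w'] by rewrite -E !inE eqxx orbT.
rewrite !inE => /orP[/eqP ew|/eqP ew]; last by rewrite eu ew.
by rewrite ew uS' in wS.
Qed.

Lemma no_edge n (G : {set {set 'I_n}}) (S : {set 'I_n}) :
  G :&: FS S (nbhd G S) == finset.set0.
Proof.
apply/eqP/setP => A; rewrite !inE; apply/negP => /andP[AG /imset2P[u w uS]].
rewrite !inE negb_or => /andP[wS] /negP wN eA; apply: wN.
rewrite wS /=; apply/existsP; exists u; rewrite uS -eA //.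
Qed.

Definition cnd (R : realType) n (d m : R) (S U : {set 'I_n}) : bool :=
  [&& (2 <= #|S|)%N, (#|S|%:R <= (n%:R : R) / (d * m)) & (#|U|%:R < d * #|S|%:R)].

Arguments cnd [R] n d m S U.



Lemma union_bound (R : realType) n (p d m : R) : 0 <= p <= 1 ->
  gnp_prob n p (bad_event n d m) <=
  \sum_(S : {set 'I_n}) \sum_(U : {set 'I_n})
     (if cnd n d m S U then (1 - p) ^+ #|FS S U| else 0).
Proof.
move=> /andP[p0 p1].
pose wgt (G : {set {set 'I_n}}) := p ^+ #|G| * (1 - p) ^+ (#|pairs n| - #|G|).
have w0 G : 0 <= wgt G by rewrite mulr_ge0 // exprn_ge0 // subr_ge0.
have step S U : (if cnd n d m S U then (1 - p) ^+ #|FS S U| else 0) =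
   \sum_(G in powerset (pairs n))
      (if cnd n d m S U && (G :&: FS S U == finset.set0) then wgt G else 0).
  case: (cnd n d m S U) => /=; last by rewrite big1.
  rewrite -big_mkcondr /= /wgt sum_sub ?FS_sub // (_ : p + (1 - p) = 1) ?expr1n ?mul1r //.
  by rewrite addrC subrK.
under eq_bigr => S _ do under eq_bigr => U _ do rewrite step.
under eq_bigr => S _ do rewrite exchange_big /=.
rewrite exchange_big /=.
rewrite /gnp_prob big_mkcondr /=; apply: ler_sum => G GP.
have g0 S U : 0 <= (if cnd n d m S U && (G :&: FS S U == finset.set0) then wgt G else 0).
  by case: ifP.
case: ifP => [bad|_]; last by apply: sumr_ge0 => S _; apply: sumr_ge0.
case/existsP: bad => S /and3P[s2 sle Nlt].
rewrite (bigD1 S) //= (bigD1 (nbhd G S)) //= (_ : cnd n d m S (nbhd G S) = true); last first.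
  by rewrite /cnd s2 sle Nlt.
rewrite no_edge /= -addrA lerDl; apply: addr_ge0; first by apply: sumr_ge0.
by apply: sumr_ge0 => U _; apply: sumr_ge0.
Qed.

Lemma real_ineq (R : realType) (N S U C L p d m : R) :
  1 <= L -> 12 <= d -> 32 <= m -> (8 * d + 12) * L <= p * N -> 0 < p ->
  2 <= S -> S * (d * m) <= N -> U <= d * S -> N - S - U <= C ->
  L * S + L * U + 2 + 3 / 2 * p * N <= p * (S * C).
Proof.
move=> L1 d12 m32 hq p0 S2 hS hU hC.
set q := p * N.
have dS0 : 0 <= d * S by nra.
have A : 32 * (d * S) <= N by nra.
have B : (15/16) * (S * q) <= p * (S * C).
  have h1 : 0 <= (d - 1) * S by apply: mulr_ge0; lra.
  have h2 : (d + 1) * S <= N / 16 by lra.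
  have h3 : N - (d + 1) * S <= C by lra.
  have h4 : 15 / 16 * N <= C by lra.
  have h5 : 0 <= p * S by apply: mulr_ge0; lra.
  have := ler_wpM2l h5 h4; rewrite /q; lra.
have C1 : L * (S + U) <= S * q / 8.
  have h1 : L * (S + U) <= L * ((d + 1) * S) by apply: ler_wpM2l; lra.
  have h2 : 0 <= S by lra.
  have h3 : (8 * d + 8) * L <= q by rewrite /q; lra.
  have := ler_wpM2l h2 h3; lra.
have q0 : 16 <= q.
  have : 0 <= (8 * d + 12) * (L - 1) by apply: mulr_ge0; lra.
  rewrite /q; lra.
have : 2 * q <= S * q by apply: ler_wpM2r; lra.
rewrite /q in B C1 q0 * => H.
lra.
Qed.

Lemma term_bound (R : realType) (n s u c : nat) (p d m : R) :
  1 <= ln (n%:R : R) -> 12 <= d -> 32 <= m ->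
  (8 * d + 12) * ln (n%:R : R) <= p * n%:R -> 0 < p -> p <= 1 ->
  (2 <= s)%N -> s%:R <= n%:R / (d * m) -> u%:R < d * s%:R -> (n <= c + s + u)%N ->
  (1 - p) ^+ (s * c) <=
  (n%:R^-1) ^+ s * (n%:R^-1) ^+ u * (expR (-2) * expR (- (3 / 2) * p * n%:R)).
Proof.
move=> L1 d12 m32 hq p0 p1 s2 hs hu hc.
have n0 : (0 : R) < n%:R.
  case: n hq L1 {hs hc} => [|k] //; by rewrite ln0 // ler10.
have xE : (n%:R : R)^-1 = expR (- ln n%:R) by rewrite expRN lnK // posrE.
apply: (le_trans (y := expR (- p) ^+ (s * c))).
  rewrite lerXn2r // ?nnegrE ?expR_ge0 ?subr_ge0 //.
  by have := expR_ge1Dx (- p).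
rewrite xE -!expRM_natr -!expRD ler_expR.
have hS : s%:R * (d * m) <= (n%:R : R).
  by rewrite -ler_pdivlMr //; apply: mulr_gt0; lra.
have hC : (n%:R : R) - s%:R - u%:R <= c%:R.
  have : (n%:R : R) <= (c + s + u)%:R by rewrite ler_nat.
  rewrite !natrD; lra.
have S2 : (2 : R) <= s%:R by rewrite (ler_nat R 2 s).
have := @real_ineq R _ _ _ _ _ _ _ _ L1 d12 m32 hq p0 S2 hS (ltW hu) hC.
rewrite natrM; lra.
Qed.

Lemma m_big (R : realType) (L d : R) :
  96 ^+ 3 <= L -> expR (expR 1) <= L -> 12 <= d -> d <= expR (L `^ 3^-1) ->
  32 <= L * ln (ln L) / (ln d * ln L).
Proof.
move=> L96 Le d12 dle.
have L0 : 0 < L by apply: lt_le_trans L96; rewrite exprn_gt0.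
set t := L `^ 3^-1.
have t0 : 0 < t by rewrite powR_gt0.
have t3 : t ^+ 3 = L.
  by rewrite -powR_mulrn ?ltW // -powRrM mulVf ?powRr1 ?ltW // pnatr_eq0.
have t96 : 96 <= t.
  have : 96 ^+ 3 <= t ^+ 3 by rewrite t3.
  by rewrite ler_pXn2r // nnegrE ?ltW.
have lnt : ln t = ln L / 3 by rewrite ln_powR mulrC.
have lnLt : ln L < 3 * t.
  have := ln_sublinear t0; rewrite lnt; lra.
have lnd0 : 0 < ln d by apply: ln_gt0; lra.
have lndt : ln d <= t.
  rewrite -[t]expRK ler_ln // posrE; lra.
have lnLe : expR 1 <= ln L.
  rewrite -[expR 1]expRK ler_ln // posrE expR_gt0 //.
have lnL0 : 0 < ln L by apply: lt_le_trans lnLe; exact: expR_gt0.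
have lnlnL : 1 <= ln (ln L).
  rewrite -[1]expRK ler_ln // posrE expR_gt0 //.
rewrite ler_pdivlMr; last by apply: mulr_gt0.
have h1 : L <= L * ln (ln L) by rewrite ler_peMr // ltW.
have h2 : ln d * ln L <= t * (3 * t).
  apply: ler_pM; lra.
have h3 : 96 * (t * t) <= t * (t * t).
  by apply: ler_wpM2r; [apply: mulr_ge0; lra|].
have h4 : L = t * (t * t) by rewrite -t3 !exprS expr0 mulr1.
lra.
Qed.

Theorem lemma17 (R : realType) (d p : nat -> R) :
  (exists n0 : nat, forall n : nat, (n0 <= n)%N ->
     12 <= d n <= expR ((ln (n%:R : R)) `^ (3^-1))) ->
  (exists n0 : nat, forall n : nat, (n0 <= n)%N ->
     (8 * d n + 12) * ln (n%:R : R) / n%:R <= p n <= 1) ->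
  exists N : nat, forall n : nat, (N <= n)%N ->
    gnp_prob n (p n) (bad_event n (d n) (m_param n (d n)))
      <= expR (- (3 / 2) * p n * n%:R).
Proof.
move=> [n1 Hd] [n2 Hp].
pose C : R := Num.max (96 ^+ 3) (expR (expR 1)).
pose N0 := (Num.trunc (expR C)).+1.
exists (maxn N0 (maxn n1 n2)) => n.
rewrite !geq_max => /and3P[hN0 hn1 hn2].
have /andP[d12 dle] := Hd n hn1.
have /andP[plo p1] := Hp n hn2.
have nC : expR C <= n%:R.
  apply: (le_trans (ltW (truncnS_gt (expR C)))).
  by rewrite ler_nat.
have n0 : (0 : R) < n%:R by apply: lt_le_trans nC; exact: expR_gt0.
have LC : C <= ln (n%:R : R).
  by rewrite -[C]expRK ler_ln // posrE expR_gt0.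
have /andP[L96 Le] : (96 ^+ 3 <= ln (n%:R : R)) && (expR (expR 1) <= ln (n%:R : R)).
  by move: LC; rewrite /C ge_max.
have L1 : 1 <= ln (n%:R : R).
  apply: le_trans L96; by rewrite exprn_ege1 // ler1n.
have pn : (8 * d n + 12) * ln (n%:R : R) <= p n * n%:R.
  by rewrite -ler_pdivrMr.
have p0 : 0 < p n.
  have : 0 < p n * n%:R by apply: lt_le_trans pn; apply: mulr_gt0; lra.
  nra.
have m32 := @m_big R _ _ L96 Le d12 dle.
have ub := @union_bound R n (p n) (d n) (m_param n (d n)).
apply: le_trans (ub _) _; first by rewrite (ltW p0) p1.
set x : R := (n%:R)^-1.
set K := expR (-2) * expR (- (3 / 2) * p n * n%:R).
have x0 : 0 <= x by rewrite invr_ge0 ltW.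
apply: (le_trans (y := \sum_(S : {set 'I_n}) \sum_(U : {set 'I_n})
                          (x ^+ #|S| * x ^+ #|U| * K))).
  apply: ler_sum => S _; apply: ler_sum => U _.
  case: ifP => [/and3P[s2 sle ult] | _]; last first.
    by apply: mulr_ge0; [apply: mulr_ge0; apply: exprn_ge0|apply: mulr_ge0; apply: expR_ge0].
  rewrite card_FS; apply: (@term_bound R n _ _ _ (p n) (d n) (m_param n (d n))) => //.
  have h1 := cardsC (S :|: U); have h2 := cardsU S U.
  rewrite card_ord in h1.
  by rewrite -{1}h1 addnC -addnA leq_add2l h2 leq_subr.
have Ssum : \sum_(S : {set 'I_n}) x ^+ #|S| = (x + 1) ^+ n.
  have := @sum_sub R _ [set: 'I_n] finset.set0 x 1 (finset.sub0set _).
  rewrite finset.setD0 cardsT card_ord cards0 expr1n mulr1 => <-.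
  apply: eq_big => [J|J _]; first by rewrite powersetE finset.subsetT finset.setI0 eqxx.
  by rewrite expr1n mulr1.
have E : \sum_(S : {set 'I_n}) \sum_(U : {set 'I_n}) (x ^+ #|S| * x ^+ #|U| * K)
   = (\sum_(S : {set 'I_n}) x ^+ #|S|) * (\sum_(U : {set 'I_n}) x ^+ #|U|) * K.
  rewrite big_distrlr /= mulr_suml; apply: eq_bigr => S _; rewrite mulr_suml //.
rewrite E Ssum.
have a1 : (x + 1) ^+ n <= expR 1.
  have : (x + 1) ^+ n <= expR x ^+ n.
    rewrite lerXn2r // ?nnegrE ?expR_ge0 //; last by rewrite addrC expR_ge1Dx.
    by apply: addr_ge0.
  rewrite -expRM_natr /x mulVf //; by rewrite gt_eqF.
have a0 : 0 <= (x + 1) ^+ n by apply: exprn_ge0; apply: addr_ge0.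
have K0 : 0 <= K by apply: mulr_ge0; apply: expR_ge0.
apply: (le_trans (y := expR 1 * expR 1 * K)).
  by apply: ler_wpM2r => //; apply: ler_pM.
rewrite /K mulrA -!expRD (_ : 1 + 1 + -2 = 0 :> R); last lra.
by rewrite add0r.
Qed.
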